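(* Let $r\ge3$. For any partition $\mathcal{Q}$ of $[r]=\{1,\dots,r\}$ with $|\mathcal{Q}|\ge2$ and any $\psi:2^{[r]}\to\mathbb{R}$ with $\psi(\emptyset)=1$, we have $\mathrm{cum}_{[r]}(\psi^{\mathcal{Q}})=0$.
   Context: $\mathfrak{P}_{[r]}$ is the set of cyclically ordered partitions of $[r]$ (partitions into non-empty blocks together with a cyclic order on the blocks), $|\mathcal{P}|$ the number of blocks. For $\phi:2^{[r]}\to\mathbb{R}$, $\mathrm{cum}_{[r]}(\phi)=\sum_{\mathcal{P}\in\mathfrak{P}_{[r]}}(-1)^{|\mathcal{P}|-1}\prod_{I\in\mathcal{P}}\phi(I)$. For a partition $\mathcal{Q}$ of $[r]$, $\psi^{\mathcal{Q}}(I)=\prod_{J\in\mathcal{Q}}\psi(I\cap J)$. *)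

(* Defs.v *)
(* [r] = {1..r} is represented by 'I_r = {0..r-1}. *)
From HB Require Import structures.
From mathcomp Require Import all_boot all_order all_algebra all_fingroup.
Set Implicit Arguments. Unset Strict Implicit. Unset Printing Implicit Defensive.
Import Order.TTheory GRing.Theory Num.Theory.
Local Open Scope ring_scope.

(* A cyclic order on a finite set P of blocks: a successor permutation s
   which is the identity off P and forms a single cycle on P
   (every block of P is reachable from every other by iterating s). *)
Definition cyclic_order_on (T : finType) (P : {set T}) (s : {perm T}) : bool :=
  [forall x, (x \notin P) ==> (s x == x)] &&
  [forall x in P, [forall y in P, fconnect s x y]].

Definition cyc_ord_partition (r : nat)
    (p : {set {set 'I_r}} * {perm {set 'I_r}}) : bool :=
  partition p.1 [set: 'I_r] && cyclic_order_on p.1 p.2.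

Definition cum (R : numDomainType) (r : nat) (phi : {set 'I_r} -> R) : R :=
  \sum_(p : {set {set 'I_r}} * {perm {set 'I_r}} | cyc_ord_partition p)
     (-1) ^+ (#|p.1|.-1) * \prod_(I in p.1) phi I.

Definition psiQ (R : numDomainType) (r : nat) (Q : {set {set 'I_r}})
    (psi : {set 'I_r} -> R) : {set 'I_r} -> R :=
  fun I => \prod_(J in Q) psi (I :&: J).

(* Main.v *)
From HB Require Import structures.
From mathcomp Require Import all_boot all_order all_algebra all_fingroup.
From mathcomp Require Import zify.
Require Import Defs.
Set Implicit Arguments. Unset Strict Implicit. Unset Printing Implicit Defensive.

Section Codes.
Variable r : nat.
Variable x0 : 'I_r.
Implicit Types (c : {ffun 'I_r -> nat}).

Definition K c := (\max_(x : 'I_r) c x).+1.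
Definition block c j := [set x | c x == j].
Definition is_code c := c x0 = 0 /\ forall j, j < K c -> exists x, c x = j.
Definition Pd c := [set block c (nat_of_ord j) | j : 'I_(K c)].
Definition nxt c (B : {set 'I_r}) := if [pick x in B] is Some x then block c ((c x).+1 %% K c) else B.
Definition sf c (B : {set 'I_r}) := if B \in Pd c then nxt c B else B.
Definition sd c : {perm {set 'I_r}} :=
  match @idP (injectiveb (sf c)) with
  | ReflectT h => perm (elimT (injectiveP _) h)
  | ReflectF _ => 1%g end.
Definition dec c := (Pd c, sd c).

Lemma c_ltK c x : c x < K c.
Proof. rewrite /K ltnS; exact: leq_bigmax. Qed.

Lemma K_gt0 c : 0 < K c. Proof. by []. Qed.

Lemma block_ne c j : is_code c -> j < K c -> exists x, x \in block c j.
Proof. by move=> [_ h] /h [x hx]; exists x; rewrite inE hx. Qed.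

Lemma block_inj c i j : is_code c -> i < K c -> block c i = block c j -> i = j.
Proof.
move=> hc hi e; have [x hx] := block_ne hc hi.
by move: (hx); rewrite e !inE => /eqP <-; move: hx; rewrite inE => /eqP.
Qed.

Lemma in_Pd c B : (B \in Pd c) = [exists j : 'I_(K c), B == block c j].
Proof.
apply/imsetP/existsP => [[j _ ->]|[j /eqP ->]]; first by exists j.
by exists j.
Qed.

Lemma block_in_Pd c j : j < K c -> block c j \in Pd c.
Proof. by move=> hj; apply/imsetP; exists (Ordinal hj). Qed.

Lemma Pd_block c B : B \in Pd c -> exists2 j, j < K c & B = block c j.
Proof. by move=> /imsetP [j _ ->]; exists j. Qed.

Lemma nxt_block c j : is_code c -> j < K c -> nxt c (block c j) = block c (j.+1 %% K c).
Proof.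
move=> hc hj; rewrite /nxt; case: pickP => [x|none].
  by rewrite inE => /eqP ->.
by have [x hx] := block_ne hc hj; move: (none x); rewrite hx.
Qed.

Lemma sf_block c j : is_code c -> j < K c -> sf c (block c j) = block c (j.+1 %% K c).
Proof. by move=> hc hj; rewrite /sf block_in_Pd // nxt_block. Qed.

Lemma sf_inj c : is_code c -> injective (sf c).
Proof.
move=> hc B B'.
have sfP : forall B, B \in Pd c -> sf c B \in Pd c.
  move=> B0 /Pd_block [j hj ->]; rewrite sf_block // block_in_Pd //.
  by rewrite ltn_mod.
case hB: (B \in Pd c); case hB': (B' \in Pd c).
- move: hB hB' => /Pd_block [i hi ->] /Pd_block [j hj ->].
  rewrite !sf_block // => /(block_inj hc) e.
  have {e}e : i + 1 = j + 1 %[mod K c] by rewrite !addn1; apply: e; rewrite ltn_mod.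
  move: e => /eqP; rewrite eqn_modDr => /eqP.
  by rewrite !modn_small // => ->.
- by move=> e; move: (sfP _ hB); rewrite e /sf hB' hB'.
- by move=> e; move: (sfP _ hB'); rewrite -e /sf hB hB.
- by rewrite /sf hB hB'.
Qed.

Lemma sdE c : is_code c -> sd c =1 sf c.
Proof.
move=> hc B; rewrite /sd; destruct (@idP (injectiveb (sf c))) as [h|h].
  by rewrite permE.
by case: h; apply/injectiveP; apply: sf_inj.
Qed.

End Codes.
Section Cyc.
Variables (r : nat) (x0 : 'I_r) (P : {set {set 'I_r}}) (s : {perm {set 'I_r}}).
Hypothesis hP : partition P [set: 'I_r].
Hypothesis hs : cyclic_order_on P s.

Let I0 := pblock P x0.

Lemma coverP x : x \in cover P.
Proof. by rewrite (cover_partition hP) inE. Qed.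

Lemma trivP : trivIset P. Proof. by case/and3P: hP. Qed.
Lemma set0P : set0 \notin P. Proof. by case/and3P: hP. Qed.

Lemma I0P : I0 \in P.
Proof. exact: pblock_mem (coverP x0). Qed.

Lemma s_off B : B \notin P -> s B = B.
Proof. by case/andP: hs => /forallP h _ hB; apply/eqP; move: (h B); rewrite hB. Qed.

Lemma s_on B B' : B \in P -> B' \in P -> fconnect s B B'.
Proof. by case/andP: hs => _ /forall_inP h hB hB'; move/forall_inP: (h B hB); apply. Qed.

Lemma sP B : B \in P -> s B \in P.
Proof.
move=> hB; apply/negPn/negP => h.
have := s_off h => /perm_inj e.
by move: h; rewrite e hB.
Qed.

Lemma iterP n : iter n s I0 \in P.
Proof. by elim: n => [|n IH] /=; [exact: I0P | exact: sP]. Qed.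

Lemma fconP B : fconnect s I0 B = (B \in P).
Proof.
apply/idP/idP => [h|h]; last exact: s_on I0P h.
by rewrite -(iter_findex h) iterP.
Qed.

Lemma orderP : fingraph.order s I0 = #|P|.
Proof. by rewrite /fingraph.order; apply: eq_card => B; rewrite inE fconP. Qed.

Lemma findex_ltP B : B \in P -> findex s I0 B < #|P|.
Proof. by rewrite -fconP -orderP; apply: findex_max. Qed.

Lemma iter_findexP B : B \in P -> iter (findex s I0 B) s I0 = B.
Proof. by rewrite -fconP; apply: iter_findex. Qed.

Lemma findex_iterP j : j < #|P| -> findex s I0 (iter j s I0) = j.
Proof. by rewrite -orderP; apply: findex_iter. Qed.

Lemma iter_cardP : iter #|P| s I0 = I0.
Proof. by rewrite -orderP; apply: iter_order; apply: perm_inj. Qed.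

Lemma pblockE x B : B \in P -> (x \in B) = (pblock P x == B).
Proof.
move=> hB; apply/idP/eqP => [h|<-]; first exact: def_pblock trivP hB h.
by rewrite mem_pblock coverP.
Qed.

Lemma nonemptyP B : B \in P -> exists x, x \in B.
Proof.
move=> hB; case: (set_0Vmem B) => [e|[x hx]]; last by exists x.
by move: set0P; rewrite -e hB.
Qed.

End Cyc.

Section Enc.
Variables (r : nat) (x0 : 'I_r).
Definition enc (p : {set {set 'I_r}} * {perm {set 'I_r}}) : {ffun 'I_r -> nat} :=
  [ffun x => findex p.2 (pblock p.1 x0) (pblock p.1 x)].

Variable p : {set {set 'I_r}} * {perm {set 'I_r}}.
Hypothesis hp : cyc_ord_partition p.
Let hP : partition p.1 [set: 'I_r]. Proof. by case/andP: hp. Qed.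
Let hs : cyclic_order_on p.1 p.2. Proof. by case/andP: hp. Qed.
Let I0 := pblock p.1 x0.

Lemma enc_inv j x : j < #|p.1| -> (x \in iter j p.2 I0) = (enc p x == j).
Proof.
move=> hj; rewrite ffunE (pblockE hP _ (iterP x0 hP hs j)).
apply/eqP/eqP => [->|<-]; first by rewrite findex_iterP.
rewrite iter_findexP //; exact: pblock_mem (coverP hP x).
Qed.

Lemma enc_lt x : enc p x < #|p.1|.
Proof. rewrite ffunE; apply: findex_ltP => //; exact: pblock_mem (coverP hP x). Qed.

Lemma enc_surj j : j < #|p.1| -> exists x, enc p x = j.
Proof.
move=> hj; have [x hx] := nonemptyP hP (iterP x0 hP hs j).
by exists x; apply/eqP; rewrite -(enc_inv _ hj).
Qed.

Lemma cardP_gt0 : 0 < #|p.1|.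
Proof. by apply/card_gt0P; exists I0; exact: I0P. Qed.

Lemma enc_K : K (enc p) = #|p.1|.
Proof.
rewrite /K; have h0 := cardP_gt0.
have [y hy] : exists y, enc p y = #|p.1|.-1 by apply: enc_surj; rewrite ltn_predL.
rewrite -[RHS](prednK h0); congr S; apply/eqP; rewrite eqn_leq; apply/andP; split.
  by apply/bigmax_leqP => x _; rewrite -ltnS (prednK h0) enc_lt.
by rewrite -hy; apply: leq_bigmax.
Qed.

Lemma enc_code : is_code x0 (enc p).
Proof.
split; first by rewrite ffunE findex0.
by rewrite enc_K; apply: enc_surj.
Qed.

Lemma enc_block j : j < #|p.1| -> block (enc p) j = iter j p.2 I0.
Proof. by move=> hj; apply/setP => x; rewrite inE enc_inv. Qed.

Lemma dec_enc : dec (enc p) = p.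
Proof.
have hc := enc_code.
have ePd : Pd (enc p) = p.1.
  apply/setP => B; apply/idP/idP => [/Pd_block [j hj ->]|hB].
    by move: hj; rewrite enc_K => hj; rewrite enc_block // iterP.
  have hf := findex_ltP x0 hP hs hB.
  rewrite -(iter_findexP x0 hP hs hB) -enc_block //; apply: block_in_Pd.
  by rewrite enc_K.
rewrite /dec ePd; suff -> : sd (enc p) = p.2 by rewrite -surjective_pairing.
apply/permP => B; rewrite (sdE hc).
case hB: (B \in p.1); last by rewrite /sf ePd hB (s_off hs) // hB.
have hj := findex_ltP x0 hP hs hB.
rewrite -(iter_findexP x0 hP hs hB).
set j := findex _ _ _ in hj *.
rewrite -enc_block // (sf_block hc); last by rewrite enc_K.
rewrite enc_K enc_block; last by rewrite ltn_mod cardP_gt0.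
rewrite (enc_block hj) -iterS.
case: (ltngtP j.+1 #|p.1|) => h; first by rewrite modn_small.
  by move: (leq_ltn_trans hj h); rewrite ltnn.
by rewrite h modnn iter_cardP.
Qed.
End Enc.

Section Dec.
Variables (r : nat) (x0 : 'I_r) (c : {ffun 'I_r -> nat}).
Hypothesis hc : is_code x0 c.

Lemma Pd_card : #|Pd c| = K c.
Proof.
rewrite card_in_imset ?cardT ?size_enum_ord //.
by move=> i j _ _ /(block_inj hc (ltn_ord i)) /val_inj.
Qed.

Lemma Pd_part : partition (Pd c) [set: 'I_r].
Proof.
apply/and3P; split.
- apply/eqP/setP => x; rewrite inE; apply/bigcupP; exists (block c (c x)).
    by apply: block_in_Pd; apply: c_ltK.
  by rewrite inE.
- apply/trivIsetP => A B /Pd_block [i hi ->] /Pd_block [j hj ->] ne.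
  rewrite -setI_eq0; apply/eqP/setP => x; rewrite !inE.
  apply/negP => /andP [/eqP e1 /eqP e2]; by move: ne; rewrite -e1 -e2 eqxx.
- apply/negP => /Pd_block [j hj e].
  by have [x] := block_ne hc hj; rewrite -e inE.
Qed.

Lemma pblock_Pd x : pblock (Pd c) x = block c (c x).
Proof.
case/and3P: Pd_part => _ ht _.
by apply: def_pblock => //; [apply: block_in_Pd; apply: c_ltK | rewrite inE].
Qed.

Lemma iter_sd i m : i < K c -> iter m (sd c) (block c i) = block c ((i + m) %% K c).
Proof.
move=> hi; elim: m => [|m IH]; first by rewrite addn0 modn_small.
rewrite iterS IH (sdE hc) (sf_block hc); last by rewrite ltn_mod.
congr block; by rewrite -addn1 modnDml addn1 addnS.
Qed.

Lemma cyc_dec : cyc_ord_partition (dec c).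
Proof.
apply/andP; split; first exact: Pd_part.
apply/andP; split.
  apply/forallP => B; apply/implyP => hB /=; rewrite (sdE hc) /sf.
  by rewrite (negbTE hB).
apply/forall_inP => A /Pd_block [i hi ->]; apply/forall_inP => B /Pd_block [j hj ->].
have -> : block c j = iter (j + (K c - i)) (sd c) (block c i).
  rewrite iter_sd // addnA [i + j]addnC -addnA subnKC; last exact: ltnW.
  by rewrite modnDr modn_small.
exact: fconnect_iter.
Qed.

Lemma enc_dec : enc x0 (dec c) = c.
Proof.
apply/ffunP => x; rewrite ffunE /= !pblock_Pd.
have hx := c_ltK c x.
have -> : block c (c x) = iter (c x) (sd c) (block c (c x0)).
  by rewrite iter_sd; case: hc => -> _; rewrite ?add0n ?modn_small.
case: (hc) => e _; rewrite e.
have := @findex_iterP r x0 (Pd c) (sd c) Pd_part _ (c x).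
rewrite pblock_Pd e; apply.
  by case/andP: cyc_dec.
by rewrite Pd_card.
Qed.
End Dec.

Lemma find_iota (a : pred nat) n i :
  i < n -> a i -> (forall j, j < i -> ~~ a j) -> find a (iota 0 n) = i.
Proof.
move=> hi ai hb.
have hh : has a (iota 0 n) by apply/hasP; exists i => //; rewrite mem_iota.
have hk := hh; rewrite has_find size_iota in hk.
have := nth_find 0 hh; rewrite nth_iota ?add0n // => ak.
case: (ltngtP (find a (iota 0 n)) i) => // h.
  by move: (hb _ h); rewrite ak.
by move: (before_find 0 h); rewrite nth_iota ?add0n ?ai // (ltn_trans hi).
Qed.

Section Tau.
Variables (r : nat) (x0 : 'I_r) (Q : {set {set 'I_r}}).
Hypothesis hQ : partition Q [set: 'I_r].
Hypothesis hQ2 : 1 < #|Q|.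
Let J0 := pblock Q x0.
Implicit Types (c : {ffun 'I_r -> nat}).

Definition pJ c j := block c j \subset J0.
Definition pN c j := [disjoint block c j & J0].
Definition mixed c j := ~~ pJ c j && ~~ pN c j.
Definition good c j := mixed c j || [&& pJ c j, pN c j.+1 & j.+1 < K c].
Definition fi c := find (good c) (iota 0 (K c)).
Definition splitc c i : {ffun 'I_r -> nat} := [ffun x => if c x < i then c x
  else if c x == i then (if x \in J0 then i else i.+1) else (c x).+1].
Definition mergec c i : {ffun 'I_r -> nat} := [ffun x => if c x <= i then c x else (c x).-1].
Definition tau c := if mixed c (fi c) then splitc c (fi c) else mergec c (fi c).

Lemma x0J0 : x0 \in J0.
Proof. by rewrite mem_pblock (cover_partition hQ) inE. Qed.

Lemma notpN (B : {set 'I_r}) : ~~ [disjoint B & J0] -> exists x, x \in B /\ x \in J0.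
Proof. by rewrite -setI_eq0 => /set0Pn [x]; rewrite inE => /andP[]; exists x. Qed.

Lemma notpJ (B : {set 'I_r}) : ~~ (B \subset J0) -> exists x, x \in B /\ x \notin J0.
Proof. by case/subsetPn => x h1 h2; exists x. Qed.

Lemma good_exists c : is_code x0 c -> exists2 j, j < K c & good c j.
Proof.
move=> hc; suff : has (good c) (iota 0 (K c)).
  by move/hasP => [j]; rewrite mem_iota add0n => /andP[_ hj] gj; exists j.
apply/negPn/negP => /hasPn hn0.
have hn : forall j, j < K c -> good c j = false.
  by move=> j hj; apply/negbTE/hn0; rewrite mem_iota add0n hj.
have hall : forall j, j < K c -> pJ c j.
  elim=> [|j IH] hj.
    have h0 : ~~ pN c 0.
      apply/negP => hd.
      have hb : x0 \in block c 0 by case: hc => e _; rewrite inE e.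
      by move: (disjointFr hd hb); rewrite x0J0.
    apply/negPn/negP => h; move: (hn 0 hj).
    by rewrite /good /mixed h h0.
  have hj' : j < K c by apply: ltn_trans hj.
  have h1 : ~~ pN c j.+1.
    apply/negP => h; move: (hn j hj').
    by rewrite /good /= IH // h hj orbT.
  apply/negPn/negP => h; move: (hn _ hj).
  by rewrite /good /mixed h h1.
have allJ0 : forall x, x \in J0.
  move=> x; have := hall _ (c_ltK c x) => /subsetP; apply; by rewrite inE.
have [A [B [hA hB ne]]] := card_gt1P hQ2.
case/and3P: hQ => /eqP hcov htriv h0.
have neJ0 : exists2 J, J \in Q & J != J0.
  case: (eqVneq A J0) => [eA|]; last by exists A.
  by exists B => //; rewrite -eA eq_sym.
case: neJ0 => J hJ hne.
case: (set_0Vmem J) => [e|[y hy]]; first by move: h0; rewrite -e hJ.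
have := def_pblock htriv hJ hy.
have J0Q : J0 \in Q by apply: pblock_mem; rewrite hcov inE.
have := def_pblock htriv J0Q (allJ0 y) => -> e.
by move: hne; rewrite e eqxx.
Qed.

Lemma fi_spec c : is_code x0 c ->
  [/\ fi c < K c, good c (fi c) & forall j, j < fi c -> ~~ good c j].
Proof.
move=> hc; have [j hj gj] := good_exists hc.
have hh : has (good c) (iota 0 (K c)) by apply/hasP; exists j => //; rewrite mem_iota.
have hk := hh; rewrite has_find size_iota in hk.
split => //.
  by have := nth_find 0 hh; rewrite nth_iota ?add0n.
move=> k hk'; have := before_find 0 hk'; rewrite nth_iota ?add0n => [->//|].
exact: ltn_trans hk' hk.
Qed.


Lemma codeI c n : c x0 = 0 -> (forall x, c x < n) ->
  (forall j, j < n -> exists x, c x = j) -> is_code x0 c /\ K c = n.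
Proof.
move=> h0 hlt hs.
have hn : 0 < n by rewrite -h0 hlt.
have hK : K c = n.
  rewrite /K -[RHS](prednK hn); congr S; apply/eqP; rewrite eqn_leq; apply/andP; split.
    by apply/bigmax_leqP => x _; rewrite -ltnS (prednK hn) hlt.
  have [y <-] : exists y, c y = n.-1 by apply: hs; rewrite ltn_predL.
  exact: leq_bigmax.
by split => //; split => //; rewrite hK.
Qed.

Lemma good_same c c' j : block c' j = block c j -> block c' j.+1 = block c j.+1 ->
  j.+1 < K c -> j.+1 < K c' -> good c' j = good c j.
Proof. by move=> e1 e2 h1 h2; rewrite /good /mixed /pJ /pN e1 e2 h1 h2. Qed.

Lemma fi_transfer c c' i : i < K c' -> good c' i ->
  (forall j, j < i -> block c' j = block c j) ->
  (exists x, x \in block c' i /\ x \in J0) ->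
  (forall j, j < i -> ~~ good c j) -> i < K c -> fi c' = i.
Proof.
move=> hi gi hb [y [hy1 hy2]] hng hiK; apply: find_iota => // j hj.
case: (ltngtP j.+1 i) => h.
- rewrite (good_same (hb _ hj) (hb _ h)) ?hng //.
    exact: ltn_trans h hiK.
  exact: ltn_trans h hi.
- by move: (leq_ltn_trans hj h); rewrite ltnn.
- have := hng _ hj; rewrite /good /mixed /pJ /pN (hb _ hj) h => /norP [hm _].
  rewrite negb_or hm /= !negb_and; apply/or3P; apply: Or32; apply/negP => hd.
  by move: (disjointFr hd hy1); rewrite hy2.
Qed.

Section Split.
Variables (c : {ffun 'I_r -> nat}) (i : nat).
Hypothesis hc : is_code x0 c.
Hypothesis hi : i < K c.
Hypothesis hm : mixed c i.
Let c' := splitc c i.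

Lemma split_code : is_code x0 c' /\ K c' = (K c).+1.
Proof.
case: (hc) => e0 hs.
have [y [y1 y2]] : exists y, y \in block c i /\ y \in J0 by apply: notpN; case/andP: hm.
have [z [z1 z2]] : exists z, z \in block c i /\ z \notin J0 by apply: notpJ; case/andP: hm.
move: y1 z1; rewrite !inE => /eqP y1 /eqP z1.
have hK := c_ltK c.
apply: codeI.
- rewrite ffunE e0; case: i => [|i'] //=; by rewrite x0J0.
- move=> x; rewrite ffunE; have := hK x.
  case: (ltngtP (c x) i) => h1 h2; try lia.
  by case: (x \in J0); lia.
- move=> j hj; case: (ltngtP j i) => h.
  + have [x hx] := hs j (ltn_trans h hi); exists x; by rewrite ffunE hx h.
  + case: j hj h => [//|j] hj h.
    case: (ltngtP j i) => h'.
    * lia.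
    * have [x hx] := hs j hj; exists x; rewrite ffunE hx.
      case: (ltngtP j i) => //; lia.
    * by exists z; rewrite ffunE z1 ltnn eqxx (negbTE z2) h'.
  + by exists y; rewrite ffunE y1 ltnn eqxx y2 h.
Qed.

Lemma split_lt j : j < i -> block c' j = block c j.
Proof.
move=> hj; apply/setP => x; rewrite !inE ffunE.
case: (ltngtP (c x) i) => h //=; rewrite ?andbF ?andbT;
  try case: (x \in J0); rewrite /= ?andbF ?andbT; apply/eqP/eqP; lia.
Qed.

Lemma split_i : block c' i = block c i :&: J0.
Proof.
apply/setP => x; rewrite !inE ffunE.
case: (ltngtP (c x) i) => h //=; rewrite ?andbF ?andbT;
  try case: (x \in J0); rewrite /= ?andbF ?andbT; apply/eqP/eqP; lia.
Qed.

Lemma split_i1 : block c' i.+1 = block c i :\: J0.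
Proof.
apply/setP => x; rewrite !inE ffunE.
case: (ltngtP (c x) i) => h //=; rewrite ?andbF ?andbT;
  try case: (x \in J0); rewrite /= ?andbF ?andbT; apply/eqP/eqP; lia.
Qed.

Lemma split_gt j : i < j -> block c' j.+1 = block c j.
Proof.
move=> hj; apply/setP => x; rewrite !inE ffunE.
case: (ltngtP (c x) i) => h //=; rewrite ?andbF ?andbT;
  try case: (x \in J0); rewrite /= ?andbF ?andbT; apply/eqP/eqP; lia.
Qed.

Hypothesis hfi : forall j, j < i -> ~~ good c j.

Lemma split_fi : fi c' = i /\ ~~ mixed c' i.
Proof.
have [y [y1 y2]] : exists y, y \in block c i /\ y \in J0 by apply: notpN; case/andP: hm.
have pJi : pJ c' i by rewrite /pJ split_i subsetIr.
split; last by rewrite /mixed pJi.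
have [_ hK] := split_code.
apply: (fi_transfer (c := c)) => //.
- by rewrite hK ltnW.
- apply/orP; right; rewrite pJi /= hK ltnS hi andbT /pN split_i1.
  rewrite -setI_eq0; apply/eqP/setP => x; rewrite !inE.
  by case: (x \in J0); rewrite ?andbF.
- exact: split_lt.
- by exists y; rewrite split_i inE y1 y2.
Qed.

Lemma merge_split : mergec c' i = c.
Proof.
apply/ffunP => x; rewrite !ffunE.
move: (c x) => y.
case: (ltngtP y i) => h; try case: (x \in J0); repeat (case: ifP => ?); try lia.
Qed.

End Split.

Section Merge.
Variables (c : {ffun 'I_r -> nat}) (i : nat).
Hypothesis hc : is_code x0 c.
Hypothesis hi1 : i.+1 < K c.
Hypothesis hpJ : pJ c i.
Hypothesis hpN : pN c i.+1.
Hypothesis hfi : forall j, j < i -> ~~ good c j.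
Let c' := mergec c i.

Lemma merge_code : is_code x0 c' /\ K c' = (K c).-1.
Proof.
case: (hc) => e0 hs.
have hK := c_ltK c.
apply: codeI.
- by rewrite ffunE e0.
- move=> x; rewrite ffunE; have := hK x.
  case: ifP => ? ?; lia.
- move=> j hj; case: (leqP j i) => h.
  + have [x hx] : exists x, c x = j by apply: hs; lia.
    exists x; by rewrite ffunE hx h.
  + have [x hx] : exists x, c x = j.+1 by apply: hs; lia.
    exists x; rewrite ffunE hx.
    case: ifP => ?; lia.
Qed.

Lemma merge_lt j : j < i -> block c' j = block c j.
Proof.
move=> hj; apply/setP => x; rewrite !inE ffunE.
case: ifP => ?; apply/eqP/eqP; lia.
Qed.

Lemma merge_i : block c' i = block c i :|: block c i.+1.
Proof.
apply/setP => x; rewrite !inE ffunE.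
case: ifP => ?; apply/eqP/orP; case: (ltngtP (c x) i) => h; try lia;
 try (by left; apply/eqP); try (by right; apply/eqP; lia);
 move=> [/eqP|/eqP]; lia.
Qed.

Lemma merge_fi : fi c' = i /\ mixed c' i.
Proof.
have [y y1] := block_ne hc (ltnW hi1).
have [z z1] := block_ne hc hi1.
have y2 : y \in J0 by move/subsetP: hpJ; apply.
have z2 : z \notin J0 by apply/negP => h; move: (disjointFr hpN z1); rewrite h.
have mi : mixed c' i.
  rewrite /mixed /pJ /pN merge_i; apply/andP; split.
    by apply/negP => /subsetP /(_ z); rewrite inE z1 orbT (negbTE z2) => /(_ isT).
  have hy : y \in block c i :|: block c i.+1 by rewrite inE y1.
  by apply/negP => hd; move: (disjointFr hd hy); rewrite y2.
split => //.
have [_ hK] := merge_code.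
apply: (fi_transfer (c := c)) => //.
- by rewrite hK; lia.
- by rewrite /good mi.
- exact: merge_lt.
- by exists y; rewrite merge_i inE y1 y2.
- exact: ltnW.
Qed.

Lemma split_merge : splitc c' i = c.
Proof.
have hJ : forall x, c x = i -> x \in J0.
  by move=> x e; move/subsetP: hpJ; apply; rewrite inE e.
have hN : forall x, c x = i.+1 -> x \notin J0.
  move=> x e; apply/negP => h; have hx : x \in block c i.+1 by rewrite inE e.
  by move: (disjointFr hpN hx); rewrite h.
apply/ffunP => x; rewrite !ffunE.
have := hJ x; have := hN x; move: (c x) => y.
case: (x \in J0) => /= h1 h2; case: (leqP y i) => ?; repeat (case: ifP => ?); try lia.
Qed.

End Merge.

Lemma tau_spec c : is_code x0 c -> is_code x0 (tau c) /\ tau (tau c) = c.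
Proof.
move=> hc; have [hi gi hb] := fi_spec hc.
case hm: (mixed c (fi c)).
  have -> : tau c = splitc c (fi c) by rewrite /tau hm.
  have [hc' _] := split_code hc hi hm.
  have [e nm] := split_fi hc hi hm hb.
  by split => //; rewrite {1}/tau e (negbTE nm) merge_split.
have -> : tau c = mergec c (fi c) by rewrite /tau hm.
move: gi; rewrite /good hm /= => /and3P [hpJ hpN hi1].
have [hc' _] := merge_code hc hi1 hpJ hpN.
have [e mi] := merge_fi hc hi1 hpJ hpN hb.
by split => //; rewrite {1}/tau e mi split_merge.
Qed.

End Tau.

Import GRing.Theory Num.Theory.
From mathcomp Require Import lra.
Section Weight.
Local Open Scope ring_scope.
Variables (R : realFieldType) (r : nat) (x0 : 'I_r) (Q : {set {set 'I_r}}).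
Hypothesis hQ : partition Q [set: 'I_r].
Hypothesis hQ2 : (1 < #|Q|)%N.
Variable psi : {set 'I_r} -> R.
Hypothesis hpsi : psi set0 = 1.
Let J0 := pblock Q x0.

Definition Wp (p : {set {set 'I_r}} * {perm {set 'I_r}}) : R :=
  (-1) ^+ (#|p.1|.-1) * \prod_(I in p.1) psiQ Q psi I.
Definition Wc (c : {ffun 'I_r -> nat}) : R :=
  (-1) ^+ (K c).-1 * \prod_(j < K c) psiQ Q psi (block c j).

Lemma W_dec c : is_code x0 c -> Wp (dec c) = Wc c.
Proof.
move=> hc; rewrite /Wp /Wc /= (Pd_card hc); congr (_ * _).
rewrite big_imset /=; last by move=> i j _ _ /(block_inj hc (ltn_ord i)) /val_inj.
by apply: eq_bigl => j; rewrite inE.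
Qed.

Lemma psiQ_split (B : {set 'I_r}) :
  psiQ Q psi (B :&: J0) * psiQ Q psi (B :\: J0) = psiQ Q psi B.
Proof.
case/and3P: hQ => /eqP hcov htriv _.
have J0Q : J0 \in Q by apply: pblock_mem; rewrite hcov inE.
rewrite /psiQ -big_split; apply: eq_bigr => J hJ /=.
case: (eqVneq J J0) => [->|ne].
  have -> : B :&: J0 :&: J0 = B :&: J0 by rewrite -setIA setIid.
  have -> : (B :\: J0) :&: J0 = set0.
    by apply/setP => x; rewrite !inE; case: (x \in J0); rewrite ?andbF.
  by rewrite hpsi mulr1.
have hd : [disjoint J & J0] by move/trivIsetP: htriv; apply.
have -> : B :&: J0 :&: J = set0.
  apply/setP => x; rewrite !inE; case hx: (x \in J); rewrite ?andbF //.
  by rewrite (disjointFr hd hx) andbF.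
have -> : (B :\: J0) :&: J = B :&: J.
  apply/setP => x; rewrite !inE; case hx: (x \in J); rewrite ?andbF ?andbT //.
  by rewrite (disjointFr hd hx).
by rewrite hpsi mul1r.
Qed.

Lemma W_split c i : is_code x0 c -> (i < K c)%N -> mixed x0 Q c i ->
  Wc (splitc x0 Q c i) = - Wc c.
Proof.
move=> hc hi hm.
have [_ hK] := split_code hQ hQ2 hc hi hm.
rewrite /Wc hK /=.
have hK0 : (0 < K c)%N by [].
rewrite -{1}(prednK hK0) exprS mulN1r -mulNr; congr (_ * _).
have mk : forall (n : nat) (F : nat -> R), \prod_(j < n) F j = \prod_(0 <= j < n) F j.
  by move=> n F; rewrite big_mkord.
rewrite (mk _ (fun j => psiQ Q psi (block (splitc x0 Q c i) j))) (mk _ (fun j => psiQ Q psi (block c j))).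
rewrite (big_cat_nat (n := i)) //=; last by rewrite ltnW // ltnS ltnW.
rewrite [in RHS](big_cat_nat (n := i)) //=; last by rewrite ltnW.
congr (_ * _).
  apply: eq_big_nat => j /andP [_ hj]; by rewrite (split_lt hQ hQ2 hi hm hj).
rewrite big_ltn; last by rewrite ltnS ltnW.
rewrite big_ltn; last by rewrite ltnS.
rewrite [in RHS]big_ltn //.
rewrite mulrA (split_i hQ hQ2 hi hm) (split_i1 hQ hQ2 hi hm) psiQ_split; congr (_ * _).
rewrite big_add1 /=; apply: eq_big_nat => j /andP [hj _].
by rewrite (split_gt hQ hQ2 hi hm hj).
Qed.

Lemma W_tau c : is_code x0 c -> Wc (tau x0 Q c) = - Wc c.
Proof.
move=> hc; have [hi gi hb] := fi_spec hQ hQ2 hc.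
case hm: (mixed x0 Q c (fi x0 Q c)).
  have -> : tau x0 Q c = splitc x0 Q c (fi x0 Q c) by rewrite /tau hm.
  exact: W_split.
have -> : tau x0 Q c = mergec c (fi x0 Q c) by rewrite /tau hm.
move: gi; rewrite /good hm /= => /and3P [hpJ hpN hi1].
have [hd hK] := merge_code hQ hQ2 hc hi1 hpJ hpN.
have [e mi] := merge_fi hQ hQ2 hc hi1 hpJ hpN hb.
have hid : (fi x0 Q c < K (mergec c (fi x0 Q c)))%N by rewrite hK -ltnS (ltn_predK hi1).
have := W_split hd hid mi; rewrite split_merge // => ->.
by rewrite opprK.
Qed.

Definition iota_p (p : {set {set 'I_r}} * {perm {set 'I_r}}) := dec (tau x0 Q (enc x0 p)).

Lemma iota_spec p : cyc_ord_partition p ->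
  [/\ cyc_ord_partition (iota_p p), iota_p (iota_p p) = p & Wp (iota_p p) = - Wp p].
Proof.
move=> hp; have hc := enc_code x0 hp.
have [hc' hinv] := tau_spec hQ hQ2 hc.
split.
- exact: cyc_dec hc'.
- by rewrite /iota_p (enc_dec hc') hinv dec_enc.
- by rewrite /iota_p W_dec // W_tau // -W_dec // dec_enc.
Qed.

End Weight.
Local Open Scope ring_scope.

Lemma sum_invol (R : realFieldType) (T : finType) (P : pred T) (F : T -> R) (g : T -> T) :
  (forall x, P x -> [/\ P (g x), g (g x) = x & F (g x) = - F x]) ->
  \sum_(x | P x) F x = 0.
Proof.
move=> h.
have e : \sum_(x | P x) F x = \sum_(x | P x) F (g x).
  rewrite (reindex_onto g g); last by move=> x /h [].
  apply: eq_bigl => x; apply/andP/idP => [[hg /eqP e]|hx].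
    by have [hgg _ _] := h _ hg; rewrite -e.
  by have [hg hgg _] := h _ hx; rewrite hg hgg eqxx.
have e2 : \sum_(x | P x) F (g x) = - \sum_(x | P x) F x.
  rewrite -sumrN; apply: eq_bigr => x /h [_ _ ->] //.
move: e; rewrite e2 => e; lra.
Qed.

Unset Implicit Arguments.
Import Order.TTheory GRing.Theory Num.Theory.
Local Open Scope ring_scope.

Theorem proposition8p1 (R : realFieldType) (r : nat) (hr : (3 <= r)%N)
    (Q : {set {set 'I_r}}) (hQ : partition Q [set: 'I_r]) (hQ2 : (2 <= #|Q|)%N)
    (psi : {set 'I_r} -> R) (hpsi : psi set0 = 1) :
  cum (psiQ Q psi) = 0.
Proof.
have hr0 : (0 < r)%N by apply: leq_trans hr.
pose x0 : 'I_r := Ordinal hr0.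
rewrite /cum.
apply: (sum_invol (g := iota_p x0 Q)) => p hp.
have [h1 h2 h3] := @iota_spec R r x0 Q hQ hQ2 psi hpsi p hp.
by split.
Qed.
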